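(* Let $0\le\alpha\le1$, let $a\in C(\mathbf{R})$ satisfy $\frac{a_1}{(1+|x|)^{\alpha}}\le a(x)\le \frac{a_2}{(1+|x|)^{\alpha}}$ ($a_1,a_2>0$), and let $V\in C^1(\mathbf{R})$ be bounded with $V>0$ and $xV'(x)\le0$. Let $R>0$, $[u_0,u_1]\in H^1(\mathbf{R})\times L^2(\mathbf{R})$ with supports in $\{|x|\le R\}$, and let $u\in C([0,\infty);H^1(\mathbf{R}))\cap C^1([0,\infty);L^2(\mathbf{R}))$ be the weak solution of $u_{tt}-u_{xx}+V(x)u+a(x)u_t=0$, $u(0)=u_0$, $u_t(0)=u_1$. Let $\varepsilon_1,\varepsilon_3>0$, $f(t)=\varepsilon_1(1+t)^2$ and $h(t,x)=\varepsilon_3(1+t)x\phi(x)$, where $\phi(x)=1$ for $|x|\le1$ and $\phi(x)=1/|x|$ for $|x|\ge1$. Then there exists $t_0$ such that for all $t\ge t_0$, $$f(t)E(t)+\int_{\mathbf{R}}h(t,x)u_x(t,x)u_t(t,x)\,dx\ \ge\ \frac12 f(t)E(t).$$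
   Context: The total energy is $E(t)=\frac12\big(\|u_t(t,\cdot)\|^2+\|u_x(t,\cdot)\|^2+\|\sqrt{V}\,u(t,\cdot)\|^2\big)$, with $\|\cdot\|$ the $L^2(\mathbf{R})$ norm. *)

(* Defs.v *)
From HB Require Import structures.
From mathcomp Require Import all_boot all_order all_algebra.
From mathcomp Require Import all_classical all_reals all_analysis.
Set Implicit Arguments. Unset Strict Implicit. Unset Printing Implicit Defensive.
Import Order.TTheory GRing.Theory Num.Theory.
Import numFieldNormedType.Exports.
Local Open Scope classical_set_scope.
Local Open Scope ring_scope.

Section Defs.
Variable R : realType.

Definition intR (f : R -> R) : R := Rintegral (@lebesgue_measure R) setT f.

Definition inL2 (f : R -> R) : Prop :=
  measurable_fun setT f /\
  (@lebesgue_measure R).-integrable setT (fun x => ((f x) ^+ 2)%:E).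

Definition sqnorm (f : R -> R) : R := intR (fun x => (f x) ^+ 2).

Definition test_fun (psi : R -> R) : Prop :=
  (forall x, derivable psi x 1) /\ continuous (derive1 psi) /\
  exists M : R, forall x, M < `|x| -> psi x = 0.

Definition weak_deriv (f g : R -> R) : Prop :=
  forall psi, test_fun psi ->
    intR (fun x => f x * derive1 psi x) = - intR (fun x => g x * psi x).

Definition inH1 (f fx : R -> R) : Prop := inL2 f /\ inL2 fx /\ weak_deriv f fx.

(* u (with weak x-derivative ux and time derivative ut, all functions of
   (t, x)) is the weak solution in C([0,oo);H^1) ∩ C^1([0,oo);L^2) of
   u_tt - u_xx + V u + a u_t = 0, u(0) = u0, u_t(0) = u1. *)
Definition weak_solution (a V u0 u1 : R -> R) (u ux ut : R -> R -> R) : Prop :=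
  (forall t, 0 <= t -> inH1 (u t) (ux t) /\ inL2 (ut t)) /\
  (forall t, 0 <= t -> forall e, 0 < e -> exists d, 0 < d /\
     forall s, 0 <= s -> `|s - t| < d ->
       sqnorm (fun x => u s x - u t x) + sqnorm (fun x => ux s x - ux t x) < e) /\
  (forall t, 0 <= t -> forall e, 0 < e -> exists d, 0 < d /\
     forall s, 0 <= s -> s != t -> `|s - t| < d ->
       sqnorm (fun x => (u s x - u t x) / (s - t) - ut t x) < e) /\
  (forall t, 0 <= t -> forall e, 0 < e -> exists d, 0 < d /\
     forall s, 0 <= s -> `|s - t| < d ->
       sqnorm (fun x => ut s x - ut t x) < e) /\
  sqnorm (fun x => u 0 x - u0 x) = 0 /\
  sqnorm (fun x => ut 0 x - u1 x) = 0 /\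
  (forall psi, test_fun psi -> forall t : R, 0 < t ->
     is_derive t (1:R) (fun s : R => intR (fun x => ut s x * psi x))
       (- intR (fun x => ux t x * derive1 psi x)
        - intR (fun x => V x * u t x * psi x)
        - intR (fun x => a x * ut t x * psi x))).

Definition energy (V : R -> R) (ux ut u : R -> R) : R :=
  2^-1 * (sqnorm ut + sqnorm ux + intR (fun x => V x * (u x) ^+ 2)).

Definition phi (x : R) : R := if `|x| <= 1 then 1 else `|x|^-1.

End Defs.

(* Main.v *)
Require Import Defs.
From HB Require Import structures.
From mathcomp Require Import all_boot all_order all_algebra.
From mathcomp Require Import all_classical all_reals all_analysis.
From mathcomp Require Import measurable_realfun.
From mathcomp Require Import ring lra.
Import Order.TTheory GRing.Theory Num.Theory.
Import numFieldNormedType.Exports.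
Local Open Scope classical_set_scope.
Local Open Scope ring_scope.

Section Aux.
Variable R : realType.

Lemma phiE (x : R) : phi x = (Num.max 1 `|x|)^-1.
Proof.
rewrite /phi; case: ifP => h.
  by rewrite max_l // invr1.
by move/negbT: h; rewrite -ltNge => h; rewrite max_r // ltW.
Qed.

Lemma xphi_le1 (x : R) : `|x * phi x| <= 1.
Proof.
rewrite phiE normrM normfV.
have hm : 0 < Num.max 1 `|x| by rewrite lt_max ltr01.
rewrite (ger0_norm (ltW hm)).
rewrite ler_pdivrMr // mul1r le_max lexx orbT //.
Qed.

Lemma phi_cont : continuous (@phi R).
Proof.
move=> x.
have -> : @phi R = fun y => (Num.max 1 `|y|)^-1 by apply: funext => y; exact: phiE.
have h1 : {for x, continuous (fun y : R => Num.max 1 `|y|)}.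
  exact: (@continuous_max R R (fun=> (1:R)) (fun y : R => `|y|) x
            (@cst_continuous _ _ _ x) (@norm_continuous _ _ x)).
by apply: (continuousV _ h1); rewrite gt_eqF // lt_max ltr01.
Qed.

Lemma phi_meas : measurable_fun setT (@phi R).
Proof. exact: continuous_measurable_fun phi_cont. Qed.

Lemma int_scale (k : R) (f : R -> R) :
  (@lebesgue_measure R).-integrable setT (fun x => (f x)%:E) ->
  (@lebesgue_measure R).-integrable setT (fun x => (k * f x)%:E).
Proof.
move=> h.
apply: eq_integrable (integrableZl measurableT k h) => //.
Qed.

Lemma int_add (f g : R -> R) :
  (@lebesgue_measure R).-integrable setT (fun x => (f x)%:E) ->
  (@lebesgue_measure R).-integrable setT (fun x => (g x)%:E) ->
  (@lebesgue_measure R).-integrable setT (fun x => (f x + g x)%:E).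
Proof.
move=> hf hg; apply: eq_integrable (integrableD measurableT hf hg) => //.
Qed.

End Aux.

Theorem lemma2p5 (R : realType) (alpha a1 a2 : R) (a V : R -> R) (Rad : R)
  (u0 u0x u1 : R -> R) (u ux ut : R -> R -> R) (eps1 eps3 : R) :
  0 <= alpha -> alpha <= 1 ->
  continuous a -> 0 < a1 -> 0 < a2 ->
  (forall x : R, a1 / (1 + `|x|) `^ alpha <= a x /\ a x <= a2 / (1 + `|x|) `^ alpha) ->
  (forall x : R, derivable V x 1) -> continuous (derive1 V) ->
  (exists M : R, forall x, `|V x| <= M) ->
  (forall x : R, 0 < V x) ->
  (forall x : R, x * derive1 V x <= 0) ->
  0 < Rad ->
  inH1 u0 u0x -> inL2 u1 ->
  (forall x : R, Rad < `|x| -> u0 x = 0 /\ u1 x = 0) ->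
  weak_solution a V u0 u1 u ux ut ->
  0 < eps1 -> 0 < eps3 ->
  exists t0 : R, forall t : R, 0 <= t -> t0 <= t ->
    (eps1 * (1 + t) ^+ 2) * energy V (ux t) (ut t) (u t)
      + intR (fun x => eps3 * (1 + t) * x * phi x * ux t x * ut t x)
    >= 2^-1 * (eps1 * (1 + t) ^+ 2) * energy V (ux t) (ut t) (u t).
Proof.
move=> _ _ _ _ _ _ _ _ _ hV _ _ _ _ _ [hreg _] e1 e3.
exists (2 * eps3 / eps1) => t t0 tt0.
have [[_ [[mux iux] _]] [mut iut]] := hreg t t0.
set A := sqnorm (ut t); set B := sqnorm (ux t).
set C := intR (fun x => V x * u t x ^+ 2).
have hA : 0 <= A by apply: Rintegral_ge0 => x _; exact: sqr_ge0.
have hB : 0 <= B by apply: Rintegral_ge0 => x _; exact: sqr_ge0.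
have hC : 0 <= C.
  by apply: Rintegral_ge0 => x _; apply: mulr_ge0; [exact: ltW|exact: sqr_ge0].
set c := eps3 * (1 + t).
have hc : 0 < c by apply: mulr_gt0 => //; lra.
set f := (fun x => eps3 * (1 + t) * x * phi x * ux t x * ut t x).
set g := (fun x => c * 2^-1 * (ux t x ^+ 2) + c * 2^-1 * (ut t x ^+ 2)).
have mf : measurable_fun setT f.
  apply: measurable_funM => //; apply: measurable_funM => //.
  apply: measurable_funM; last exact: phi_meas.
  apply: measurable_funM; first exact: measurable_cst.
  exact: measurable_id.
have ig : (@lebesgue_measure R).-integrable setT (EFin \o g).
  by rewrite /g; apply: int_add; apply: int_scale.
have fg : forall x, `|f x| <= g x.
  move=> x.
  have h1 := @xphi_le1 R x.
  have -> : f x = c * (x * phi x) * (ux t x * ut t x) by rewrite /f /c; ring.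
  have h3 : `|ux t x * ut t x| <= 2^-1 * (ux t x ^+ 2 + ut t x ^+ 2).
    rewrite normrM; have := sqr_ge0 (`|ux t x| - `|ut t x|).
    rewrite -(real_normK (num_real (ux t x))) -(real_normK (num_real (ut t x))).
    move: (normr_ge0 (ux t x)) (normr_ge0 (ut t x)) => p q.
    set p1 := `|ux t x|; set q1 := `|ut t x|; move=> h; nra.
  have h4 : `|x * phi x| * `|ux t x * ut t x| <= `|ux t x * ut t x|.
    by rewrite -[X in _ <= X]mul1r; apply: ler_wpM2r.
  rewrite normrM normrM (gtr0_norm hc) -mulrA.
  apply: le_trans (ler_wpM2l (ltW hc) (le_trans h4 h3)) _.
  by rewrite /g le_eqVlt; apply/orP; left; apply/eqP; ring.
have ifn : (@lebesgue_measure R).-integrable setT (EFin \o f).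
  apply: le_integrable ig => //; first exact/measurable_EFinP.
  move=> x _ /=; rewrite lee_fin (le_trans (fg x)) //.
  exact: ler_norm.
have hI : `|intR f| <= c * 2^-1 * (B + A).
  have eg : intR g = c * 2^-1 * (B + A).
    rewrite /intR /g RintegralD //; last 2 first.
    - by apply: int_scale.
    - by apply: int_scale.
    rewrite !RintegralZl // /B /A /sqnorm /intR; ring.
  rewrite -eg; apply: (le_trans (le_normr_Rintegral measurableT ifn)).
  apply: le_Rintegral => //.
    exact: integrable_norm.
rewrite /energy -/A -/B -/C.
set E := 2^-1 * (A + B + C).
set F := eps1 * (1 + t) ^+ 2.
have hE : 0 <= E by rewrite /E; apply: mulr_ge0; lra.
have hAB : 2^-1 * (A + B) <= E by rewrite /E; lra.
have ht : 2 * eps3 <= t * eps1 by rewrite -ler_pdivrMr.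
have key : c <= 2^-1 * F.
  rewrite /c /F expr2; nra.
have h1 : - (c * E) <= intR f.
  have h3 : - intR f <= c * 2^-1 * (B + A) by apply: ler_normlW; rewrite normrN.
  have h2 : c * (2^-1 * (B + A)) <= c * E by apply: ler_wpM2l; [exact: ltW| lra].
  rewrite mulrA in h2; lra.
have h2 : c * E <= 2^-1 * F * E by rewrite ler_wpM2r.
lra.
Qed.
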